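(* Let $\Gamma$ be an ordered abelian group and let $v:\mathcal{T}(\Gamma)\to\Gamma'\cup\{\infty\}$ be a valuation on the hyperfield $\mathcal{T}(\Gamma)$ with value group $\Gamma'$. Then there exists a convex subgroup $\Delta$ of $\Gamma$ such that $\Gamma/\Delta\simeq\Gamma'$ via an order-preserving group isomorphism.
   Context: A hyperfield is $(F,+,\cdot,0,1)$ with $+$ a multivalued operation making $(F,+,0)$ a canonical hypergroup (associative, commutative, unique inverses $-x$ with $0\in x+(-x)$, and $z\in x+y\Rightarrow y\in z+(-x)$), $(F,\cdot)$ commutative with $0$ absorbing, $x(y+z)=xy+xz$, and $F\setminus\{0\}$ an abelian group with neutral $1\neq0$. For an ordered abelian group $(\Gamma,+,<,0)$ and $\infty>\Gamma$ with $\gamma+\infty=\infty+\gamma=\infty$, $\mathcal{T}(\Gamma)$ is the hyperfield on $\Gamma\cup\{\infty\}$ with multiplication $+$, zero $\infty$, unit $0$, and hyperaddition $x\boxplus\infty=\infty\boxplus x=\{x\}$, $x\boxplus y=\{\min\{x,y\}\}$ for $x\neq y$, $x\boxplus x=\{z:x\le z\le\infty\}$. Valuation on a hyperfield $F$: a surjective map $v:F\to\Gamma'\cup\{\infty\}$ ($\Gamma'$ ordered abelian group) with $vx=\infty\iff x$ is the zero of $F$, $v(xy)=vx+vy$, $z\in x+y\Rightarrow vz\ge\min\{vx,vy\}$; its value group is the image of the non-zero elements. A subgroup $\Delta\le\Gamma$ is convex if $\delta_1<\gamma<\delta_2$ with $\delta_i\in\Delta$ implies $\gamma\in\Delta$;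 $\Gamma/\Delta$ is ordered by $x+\Delta\prec y+\Delta$ iff $x<y$ and $y-x\notin\Delta$. *)

(* Defs.v *)
From mathcomp Require Import all_boot all_order all_algebra.
Set Implicit Arguments. Unset Strict Implicit. Unset Printing Implicit Defensive.
Import GRing.Theory.
Local Open Scope ring_scope.

Definition ordered_abgroup (G : zmodType) (lt : rel G) : Prop :=
  [/\ (forall x, ~~ lt x x),
      (forall x y z, lt x y -> lt y z -> lt x z),
      (forall x y, [\/ lt x y, x = y | lt y x]) &
      (forall x y z, lt x y -> lt (x + z) (y + z))].

Definition oleq (G : zmodType) (lt : rel G) (x y : G) : bool := lt x y || (x == y).

(* Gamma u {oo} is modelled by option G, with None = oo. *)
Definition ext_le (G : zmodType) (lt : rel G) (x y : option G) : bool :=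
  match x, y with
  | _, None => true
  | None, Some _ => false
  | Some a, Some b => oleq lt a b
  end.

(* addition of Gamma extended with gamma + oo = oo + gamma = oo;
   this is the multiplication of T(Gamma) and of Gamma' u {oo} *)
Definition ext_add (G : zmodType) (x y : option G) : option G :=
  match x, y with
  | Some a, Some b => Some (a + b)
  | _, _ => None
  end.

Definition omin (G : zmodType) (lt : rel G) (a b : G) : G :=
  if lt a b then a else b.

(* z \in x [+] y  in the hyperfield T(Gamma) *)
Definition T_hyperadd (G : zmodType) (lt : rel G) (x y z : option G) : Prop :=
  match x, y with
  | None, _ => z = y
  | _, None => z = x
  | Some a, Some b =>
      if a == b then ext_le lt x z = true else z = Some (omin lt a b)
  end.

Definition ext_min (G : zmodType) (lt : rel G) (x y : option G) : option G :=
  match x, y with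
  | None, _ => y
  | _, None => x
  | Some a, Some b => Some (omin lt a b)
  end.

Definition T_valuation (G : zmodType) (lt : rel G) (G' : zmodType) (lt' : rel G')
    (v : option G -> option G') : Prop :=
  [/\ (forall w, exists x, v x = w),
      (forall x, v x = None <-> x = None),
      (forall x y, v (ext_add x y) = ext_add (v x) (v y)) &
      (forall x y z, T_hyperadd lt x y z -> ext_le lt' (ext_min lt' (v x) (v y)) (v z))].

Definition value_group (G : zmodType) (G' : zmodType) (v : option G -> option G') (g : G') : Prop :=
  exists x, x <> None /\ v x = Some g.

Definition subgroup (G : zmodType) (D : G -> Prop) : Prop :=
  D 0 /\ (forall x y, D x -> D y -> D (x - y)).

Definition convex (G : zmodType) (lt : rel G) (D : G -> Prop) : Prop :=
  forall d1 g d2, D d1 -> D d2 -> lt d1 g -> lt g d2 -> D g.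

(* order on G/D:  x + D < y + D  iff  x < y and y - x \notin D *)
Definition quot_lt (G : zmodType) (lt : rel G) (D : G -> Prop) (x y : G) : Prop :=
  lt x y /\ ~ D (y - x).

(* Main.v *)
Require Import Defs.
From mathcomp Require Import all_boot all_order all_algebra.
Import GRing.Theory.
Local Open Scope ring_scope.

Theorem mainTheorem15 (G : zmodType) (lt : rel G) (G' : zmodType) (lt' : rel G')
    (v : option G -> option G') :
  ordered_abgroup lt -> ordered_abgroup lt' ->
  T_valuation lt lt' v ->
  (forall g : G', value_group v g) ->
  exists D : G -> Prop,
    [/\ subgroup D, convex lt D &
      exists f : G -> G',
        [/\ (forall x y, f (x + y) = f x + f y),
            (forall g, exists x, f x = g),
            (forall x, f x = 0 <-> D x) &
            (forall x y, quot_lt lt D x y <-> lt' (f x) (f y))]].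
Proof.
move=> [irr tr tri _] [irr' tr' tri' _] [vsurj vnone vmul vhyp] vg.
pose f a := odflt 0 (v (Some a)).
have vS : forall a, v (Some a) = Some (f a).
  move=> a; rewrite /f; case E: (v (Some a)) => [b|] //.
  by move/vnone: E.
have fadd : forall x y, f (x + y) = f x + f y.
  move=> x y; have := vmul (Some x) (Some y); rewrite /= !vS; by case.
have f0 : f 0 = 0.
  apply: (@addrI _ (f 0)); by rewrite -fadd !addr0.
have fB : forall x y, f (x - y) = f x - f y.
  move=> x y; apply: (@addIr _ (f y)); by rewrite -fadd !subrK.
have mono : forall a c, oleq lt a c -> oleq lt' (f a) (f c).
  move=> a c H; have := vhyp (Some a) (Some a) (Some c).
  rewrite /T_hyperadd eqxx /= !vS /= /omin.
  by case: ifP => _; apply.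
have anti : forall a b, oleq lt' a b -> oleq lt' b a -> a = b.
  move=> a b /orP[h1|/eqP//] /orP[h2|/eqP//].
  by have := irr' a; rewrite (tr' _ _ _ h1 h2).
exists (fun x => f x = 0); split.
- split => // x y hx hy; by rewrite fB hx hy subr0.
- move=> d1 g d2 h1 h2 l1 l2; apply: anti.
    by rewrite -h2; apply: mono; rewrite /oleq l2.
  by rewrite -h1; apply: mono; rewrite /oleq l1.
exists f; split => //.
- move=> g; have [x [_ hx]] := vg g; case: x hx => [a|]; last first.
    by have := proj2 (vnone None) erefl => ->.
  by rewrite vS => -[<-]; exists a.
- move=> x y; rewrite /quot_lt fB; split.
  + move=> [hxy hne]; have := mono x y; rewrite /oleq hxy /= => /(_ isT).
    case/orP => // /eqP e; by exfalso; apply: hne; rewrite e subrr.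
  + move=> h; split; last first.
      move=> /eqP; rewrite subr_eq0 => /eqP e.
      by have := irr' (f x); rewrite -{2}e h.
    case: (tri x y) => [//|e|hyx].
      by subst y; have := irr' (f x); rewrite h.
    have := mono y x; rewrite /oleq hyx /= => /(_ isT).
    case/orP => [h2|/eqP e].
      by have := irr' (f x); rewrite (tr' _ _ _ h h2).
    by have := irr' (f x); rewrite -{2}e h.
Qed.
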